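(* Let $H\ge2$ be an integer, $E_\infty=2\sqrt{\frac{H-1}{H}}$, and for $u\le -E_\infty$ let \[ I(u)=-\frac{u}{E_\infty^2}\sqrt{u^2-E_\infty^2}-\log\!\left(-u+\sqrt{u^2-E_\infty^2}\right)+\log E_\infty . \] For each integer $k\ge0$ define $\Theta_{k,H}:\mathbb{R}\to\mathbb{R}$ by \[ \Theta_{k,H}(u)=\begin{cases}\frac12\log(H-1)-\frac{(H-2)u^2}{4(H-1)}-(k+1)I(u), & u\le -E_\infty,\\[2pt] \frac12\log(H-1)-\frac{H-2}{4(H-1)}, & u\ge -E_\infty.\end{cases} \] Then for all integers $k>0$ and all $u<-E_\infty$, $\Theta_{k,H}(u)<\Theta_{0,H}(u)$.
   Context: These functions describe the logarithmic asymptotics (normalized by $\Lambda$) of the mean number of critical values of index $k$ below level $\Lambda u$ of the $H$-spin spherical spin-glass Hamiltonian; the claim itself is a statement purely about the explicitly defined functions above. *)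

(* Defs.v *)
From Stdlib Require Import Reals.
Open Scope R_scope.

Definition E_inf (H : nat) : R := 2 * sqrt ((INR H - 1) / INR H).

Definition I_fun (H : nat) (u : R) : R :=
  - (u / (E_inf H ^ 2)) * sqrt (u ^ 2 - E_inf H ^ 2)
  - ln (- u + sqrt (u ^ 2 - E_inf H ^ 2)) + ln (E_inf H).

Definition Theta (k H : nat) (u : R) : R :=
  if Rle_dec u (- E_inf H) then
    / 2 * ln (INR H - 1) - (INR H - 2) * u ^ 2 / (4 * (INR H - 1))
      - (INR k + 1) * I_fun H u
  else
    / 2 * ln (INR H - 1) - (INR H - 2) / (4 * (INR H - 1)).

(* Main.v *)
Require Import Defs.
From Stdlib Require Import Reals Lra Lia.
From Coquelicot Require Import Coquelicot.
Open Scope R_scope.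

Lemma ln_bound (t : R) : 1 < t -> 2 * ln t < t - / t.
Proof.
  intro Ht.
  destruct (MVT_cor2 (fun x => x - / x - 2 * ln x) (fun x => 1 + / x ^ 2 - 2 * / x) 1 t Ht)
    as [c [Hc1 Hc2]].
  { intros c Hc. apply is_derive_Reals. auto_derive. lra. field. lra. }
  rewrite ln_1 in Hc1.
  assert (Hp : 0 < 1 + / c ^ 2 - 2 * / c).
  { replace (1 + / c ^ 2 - 2 * / c) with ((1 - / c) ^ 2) by (field; lra).
    assert (0 < 1 - / c).
    { assert (/ c < 1). { rewrite <- Rinv_1. apply Rinv_lt_contravar; lra. } lra. }
    nra. }
  assert (0 < (1 + / c ^ 2 - 2 * / c) * (t - 1)) by nra.
  rewrite Rinv_1 in Hc1. lra.
Qed.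

Lemma I_pos (H : nat) (u : R) : (2 <= H)%nat -> u < - E_inf H -> 0 < I_fun H u.
Proof.
  intros HH Hu.
  assert (HR : 2 <= INR H) by (apply (le_INR 2); auto).
  set (EE := E_inf H).
  assert (HE : 0 < EE).
  { unfold EE, E_inf. apply Rmult_lt_0_compat; [lra|]. apply sqrt_lt_R0.
    apply Rdiv_lt_0_compat; lra. }
  fold EE in Hu.
  unfold I_fun. fold EE.
  set (v := - u).
  assert (Hv : EE < v) by (unfold v; lra).
  set (s := sqrt (u ^ 2 - EE ^ 2)).
  assert (Hq : 0 < u ^ 2 - EE ^ 2) by nra.
  assert (Hs : 0 < s) by (apply sqrt_lt_R0; auto).
  assert (Hs2 : s * s = u ^ 2 - EE ^ 2) by (apply sqrt_sqrt; lra).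
  set (t := (v + s) / EE).
  assert (Ht : 1 < t).
  { unfold t. apply (Rmult_lt_reg_r EE); [auto|]. field_simplify; lra. }
  assert (Hln : ln (v + s) - ln EE = ln t).
  { unfold t. rewrite ln_div; lra. }
  assert (Hsq : EE * EE = (v - s) * (v + s)) by (unfold v; nra).
  assert (Hinv : / t = (v - s) / EE).
  { unfold t. rewrite Rinv_div. apply (Rmult_eq_reg_r (EE * (v + s))).
    2:{ apply Rgt_not_eq. apply Rmult_lt_0_compat; lra. }
    field_simplify; try lra. }
  pose proof (ln_bound t Ht) as Hb.
  rewrite Hinv in Hb. unfold t in Hb.
  assert (Hts : (v + s) / EE - (v - s) / EE = 2 * s / EE) by (field; lra).
  assert (Hk : s / EE < v * s / EE ^ 2).
  { apply (Rmult_lt_reg_r (EE ^ 2)); [nra|]. field_simplify; try lra. nra. }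
  replace (- (u / EE ^ 2) * s) with (v * s / EE ^ 2) by (unfold v; field; lra).
  assert (ln t < s / EE).
  { unfold t. rewrite Hts in Hb. unfold Rdiv in *. lra. }
  fold v. lra.
Qed.

Theorem corollary4p1 (H k : nat) (u : R) :
  (2 <= H)%nat -> (0 < k)%nat -> u < - E_inf H ->
  Theta k H u < Theta 0 H u.
Proof.
  intros HH Hk Hu.
  pose proof (I_pos H u HH Hu) as HI.
  assert (HkR : 1 <= INR k) by (apply (le_INR 1); lia).
  unfold Theta. destruct (Rle_dec u (- E_inf H)); [|lra].
  simpl INR. nra.
Qed.
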